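(* Let $f:\mathbb{Z}_2^n\to\mathbb{Z}_2$ be a boolean function with EPC distance $d$. Then for all $\mu\in\mathbb{Z}_2^n$, $k\preceq\mu$ and $u\in V_{\bar\mu}$, with $P_{u,k,\mu}=\sum_{x\in k+V_{\bar\mu}}(-1)^{f(x)+u\cdot x}$, $$|P_{u,k,\mu}|^2\le 2^{n-w(\mu)}\left\{\sum_{i=d-w(\mu)}^{n-w(\mu)}\binom{n-w(\mu)}{i}+1\right\},$$ where $\binom{m}{i}=0$ for $i<0$.
   Context: For $x\in\mathbb{Z}_2^n$, $w(x)$ is the Hamming weight; $x\preceq y$ means $x_j\le y_j$ for all $j$; $\bar a$ is the complement of $a$; $V_a=\{x: x\preceq a\}$ and, for $k\preceq\mu$, $k+V_{\bar\mu}=\{k+x: x\preceq\bar\mu\}$; exponents of $(-1)$ are computed mod 2. EPC distance: for $k\preceq\mu$, $v(a,k,\mu)=\sum_{x\in k+V_{\bar\mu}}(-1)^{f(x)+f(x+a)}$. For $l\ge1,q\ge0$, $f$ satisfies EPC($l$) of order $q$ if $v(a,k,\mu)=0$ whenever $k\preceq\mu$, $1\le w(a)\le l$, $0\le w(\mu)\le q$. The EPC distance of $f$ is the largest integer $d\ge1$ such that $f$ satisfies EPC($l$) of order $q$ for all $l\ge1,q\ge0$ with $l+q<d$. *)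

(* Defs.v *)
(* Z_2^n is modelled as {ffun 'I_n -> bool}; Z_2 as bool,
   addition in Z_2 is xor (+). Signs (-1)^b are computed in int. *)
From mathcomp Require Import all_boot all_order all_algebra.
Set Implicit Arguments. Unset Strict Implicit. Unset Printing Implicit Defensive.
Import Order.TTheory GRing.Theory Num.Theory.

Definition vec (n : nat) := {ffun 'I_n -> bool}.

Definition wt n (x : vec n) : nat := #|[set i | x i]|.
Definition prec n (x y : vec n) : bool := [forall i, x i ==> y i].
Definition compl n (a : vec n) : vec n := [ffun i => ~~ a i].
Definition addv n (x y : vec n) : vec n := [ffun i => x i (+) y i].
Definition dotv n (u x : vec n) : bool := \big[xorb/false]_i (u i && x i).
Definition Vset n (a : vec n) : {set vec n} := [set x | prec x a].
Definition coset n (k mu : vec n) : {set vec n} :=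
  [set addv k x | x in Vset (compl mu)].

Definition sgn (b : bool) : int := ((-1) ^+ b)%R.

Definition vEPC n (f : vec n -> bool) (a k mu : vec n) : int :=
  (\sum_(x in coset k mu) sgn (f x (+) f (addv x a)))%R.

Definition EPC n (f : vec n -> bool) (l q : nat) : Prop :=
  forall a k mu : vec n, prec k mu -> 1 <= wt a <= l -> wt mu <= q ->
    vEPC f a k mu = 0%R.

Definition EPC_upto n (f : vec n -> bool) (d : nat) : Prop :=
  forall l q : nat, 1 <= l -> l + q < d -> EPC f l q.

Definition EPC_distance n (f : vec n -> bool) (d : nat) : Prop :=
  1 <= d /\ EPC_upto f d /\ (forall d', d < d' -> ~ EPC_upto f d').

Definition Pwalsh n (f : vec n -> bool) (u k mu : vec n) : int :=
  (\sum_(x in coset k mu) sgn (f x (+) dotv u x))%R.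

(* Main.v *)
Require Import Defs.
From mathcomp Require Import all_boot all_order all_algebra.
From mathcomp Require Import zify.
Import Order.TTheory GRing.Theory Num.Theory.
Set Implicit Arguments. Unset Strict Implicit. Unset Printing Implicit Defensive.

Lemma sgnD b c : sgn (b (+) c) = (sgn b * sgn c)%R.
Proof. by case: b; case: c; rewrite /sgn /= ?expr0 ?expr1 ?mulr1 ?mul1r ?mulrNN. Qed.

Lemma sgn4 b1 b2 c1 c2 :
  (sgn (b1 (+) c1) * sgn (b2 (+) (c1 (+) c2)) = sgn c2 * sgn (b1 (+) b2))%R.
Proof. by case: b1; case: b2; case: c1; case: c2. Qed.

Lemma norm_sgn b : (`|sgn b| = 1)%R.
Proof. by case: b. Qed.

Lemma xor_big (I : Type) (r : seq I) (P : pred I) (F : I -> bool) :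
  \big[xorb/false]_(i <- r | P i) F i = \big[addb/false]_(i <- r | P i) F i.
Proof.
elim: r => [|i r IH]; first by rewrite !big_nil.
by rewrite !big_cons IH; case: (P i) => //; case: (F i); case: (\big[addb/false]_(j <- r | P j) F j).
Qed.

Section V.
Variable n : nat.
Implicit Types x y a k mu u : vec n.

Lemma vaddK x a : Defs.addv x (Defs.addv x a) = a.
Proof. by apply/ffunP=> i; rewrite !ffunE addKb. Qed.

Lemma vadd_inj x : injective (Defs.addv x).
Proof. exact: can_inj (vaddK x). Qed.

Lemma vaddA x y a : Defs.addv x (Defs.addv y a) = Defs.addv (Defs.addv x y) a.
Proof. by apply/ffunP=> i; rewrite !ffunE addbA. Qed.

Lemma precC a mu : prec a (compl mu) = [forall i, ~~ (a i && mu i)].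
Proof.
apply: eq_forallb => i; rewrite ffunE; by case: (a i); case: (mu i).
Qed.

Lemma prec_add y a mu : prec y (compl mu) ->
  prec (Defs.addv y a) (compl mu) = prec a (compl mu).
Proof.
rewrite !precC => /forallP H; apply: eq_forallb => i; rewrite ffunE.
by move: (H i); case: (y i); case: (a i); case: (mu i).
Qed.

Lemma inC x k mu : (x \in coset k mu) = prec (Defs.addv k x) (compl mu).
Proof.
apply/imsetP/idP => [[y]|H].
  by rewrite inE => Hy ->; rewrite vaddK.
by exists (Defs.addv k x); rewrite ?inE // vaddK.
Qed.

Lemma dotvD u x y : dotv u (Defs.addv x y) = dotv u x (+) dotv u y.
Proof.
rewrite /dotv; rewrite !xor_big; rewrite -big_split /=; apply: eq_bigr => i _; rewrite ffunE.
by case: (u i); case: (x i); case: (y i).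
Qed.

End V.

Lemma Psq n (f : vec n -> bool) u k mu :
  (Pwalsh f u k mu ^+ 2 =
   \sum_(a in Vset (compl mu)) sgn (dotv u a) * vEPC f a k mu)%R.
Proof.
rewrite expr2 /Pwalsh mulr_suml.
transitivity (\sum_(x in coset k mu) \sum_(a in Vset (compl mu))
   sgn (dotv u a) * sgn (f x (+) f (Defs.addv x a)))%R.
  apply: eq_bigr => x xC.
  rewrite mulr_sumr (reindex_inj (@vadd_inj _ x)) /=.
  apply: eq_big => [a|a _].
    by rewrite inC inE vaddA prec_add // -inC.
  by rewrite (dotvD u x a) sgn4.
rewrite exchange_big /=; apply: eq_bigr => a _; rewrite /vEPC mulr_sumr.
by [].
Qed.

Lemma count_sets (T : finType) (S : {set T}) (P : pred nat) :
 #|[set A : {set T} | (A \subset S) && P #|A|]| = \sum_(i < #|S|.+1 | P i) 'C(#|S|, i).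
Proof.
rewrite -sum1_card (partition_big (fun A : {set T} => (inord #|A| : 'I_#|S|.+1)) (fun i => P i)).
  apply: eq_bigr => i Pi.
  transitivity #|[set A : {set T} | A \subset S & #|A| == i]|; last exact: cards_draws.
  rewrite -(sum1_card (mem [set A : {set T} | A \subset S & #|A| == i])); apply: eq_bigl => A.
  rewrite !inE; apply/andP/andP => [[/andP[sAS _] /eqP <-]|[sAS /eqP eAi]].
    by split=>//; rewrite inordK // ltnS subset_leq_card.
  split; first by rewrite sAS eAi.
  by apply/eqP/val_inj; rewrite /= inordK // eAi.
move=> A; rewrite inE => /andP[sAS PA]; by rewrite inordK // ltnS subset_leq_card.
Qed.

Definition ind n (A : {set 'I_n}) : vec n := [ffun i => i \in A].
Definition supp n (a : vec n) : {set 'I_n} := [set i | a i].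

Lemma suppK n : cancel (@ind n) (@supp n).
Proof. by move=> A; apply/setP=> i; rewrite inE ffunE. Qed.
Lemma indK n : cancel (@supp n) (@ind n).
Proof. by move=> a; apply/ffunP=> i; rewrite ffunE inE. Qed.

Lemma prec_supp n (a mu : vec n) : prec a (compl mu) = (supp a \subset ~: supp mu).
Proof.
rewrite precC; apply/forallP/subsetP => [H i|H i].
  by rewrite !inE => ai; move: (H i); rewrite ai.
by apply/negP => /andP[ai mi]; move: (H i); rewrite !inE ai mi => /(_ isT).
Qed.

Lemma count_V n (mu : vec n) (P : pred nat) :
 #|[set a : vec n | prec a (compl mu) && P (wt a)]| =
 #|[set A : {set 'I_n} | (A \subset ~: supp mu) && P #|A|]|.
Proof.
rewrite -(card_imset _ (can_inj (@suppK n))); apply: eq_card => a.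
rewrite inE prec_supp -[wt a]/#|supp a|; apply/idP/imsetP => [H|[A]].
  by exists (supp a); rewrite ?inE ?indK.
by rewrite inE => H ->; rewrite suppK.
Qed.

Lemma card_compl n (mu : vec n) : #|~: supp mu| = n - wt mu.
Proof. by rewrite cardsCs setCK card_ord. Qed.

Lemma card_V n (mu : vec n) : #|Vset (compl mu)| = 2 ^ (n - wt mu).
Proof.
transitivity #|[set a : vec n | prec a (compl mu) && predT (wt a)]|.
  by apply: eq_card => a; rewrite !inE andbT.
rewrite count_V -card_compl -card_powerset; apply: eq_card => A.
by rewrite !inE andbT.
Qed.

Lemma card_coset n (k mu : vec n) : #|coset k mu| = 2 ^ (n - wt mu).
Proof. by rewrite card_imset ?card_V //; apply: vadd_inj. Qed.

Lemma count_bound (m d' : nat) :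
  \sum_(i < m.+1 | (i == 0 :> nat) || (d' <= i)) 'C(m, i) <=
  \sum_(d' <= i < m.+1) 'C(m, i) + 1.
Proof.
apply: (@leq_trans (\sum_(i < m.+1) ((if d' <= i then 'C(m, i) else 0) +
                                    (if i == 0 :> nat then 'C(m, i) else 0)))).
  rewrite big_mkcond; apply: leq_sum => i _.
  by case: (i == 0 :> nat); case: (d' <= i) => //=; rewrite ?leq_addr ?leq_addl.
rewrite big_split /= big_geq_mkord -big_mkcond /= leq_add2l.
rewrite big_ord_recl /= bin0 big1 // => i _.
Qed.

Lemma sumPosz (I : Type) (r : seq I) (P : pred I) (F : I -> nat) :
  (\sum_(i <- r | P i) Posz (F i))%R = Posz (\sum_(i <- r | P i) F i)%N.
Proof. by elim/big_rec2: _ => // i x y _ ->; rewrite PoszD. Qed.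

Theorem mainTheorem4 (n : nat) (f : vec n -> bool) (d : nat) :
  EPC_distance f d ->
  forall (mu k u : vec n), prec k mu -> u \in Vset (compl mu) ->
    ((`|Pwalsh f u k mu| ^+ 2)%R <=
     ((2 ^ (n - wt mu) *
       (\sum_(d - wt mu <= i < (n - wt mu).+1) 'C(n - wt mu, i) + 1))%N)%:Z)%R.
Proof.
move=> [_ [Hup _]] mu k u kmu _.
have Hz : forall a, 0 < wt a -> wt a < d - wt mu -> vEPC f a k mu = 0%R.
  move=> a wa wad; apply: (Hup (wt a) (wt mu)) => //.
  - by lia.
  - by rewrite wa leqnn.
have Hb : forall a, (`|vEPC f a k mu| <= (2 ^ (n - wt mu))%:Z)%R.
  move=> a; rewrite /vEPC; apply: le_trans (ler_norm_sum _ _ _) _.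
  under eq_bigr do rewrite norm_sgn.
  by rewrite sumr_const card_coset natz.
rewrite -normrX Psq; apply: le_trans (ler_norm_sum _ _ _) _.
apply: (@le_trans _ _ (\sum_(a in Vset (compl mu))
   ((if (wt a == 0) || (d - wt mu <= wt a) then 2 ^ (n - wt mu) else 0)%N)%:Z)%R).
  apply: ler_sum => a _; rewrite normrM norm_sgn mul1r.
  case: ifP => H; first exact: Hb.
  move/negbT: H; rewrite negb_or => /andP[]; rewrite -lt0n -ltnNge => wa wad.
  by rewrite Hz // normr0.
rewrite sumPosz lez_nat -big_mkcondr /=.
rewrite (eq_bigl (mem [set a : vec n | prec a (compl mu) &&
                         ((fun i => (i == 0) || (d - wt mu <= i)) (wt a))])); last first.
  by move=> a; rewrite !inE.
rewrite sum_nat_const mulnC leq_mul2l; apply/orP; right.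
rewrite (count_V mu (fun i => (i == 0) || (d - wt mu <= i))).
rewrite (count_sets (~: supp mu) (fun i => (i == 0) || (d - wt mu <= i))) card_compl.
exact: count_bound.
Qed.
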